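(* Run WSU-UX with $K=2$ and any valid $(\eta,\gamma)$ on the two-phase loss sequence, and assume $\Pr(\mathcal E_2)>0$. Let $t_0=T_1+T_2+1$, let $1\le\tau\le T_3+T_4$ and $t=t_0+\tau$. Then $$\mathbb{E}[\pi_{t,2}\mid\mathcal E_2]\le\frac34\exp\Bigl(-\frac{\eta}{4}\tau\Bigr).$$
   Context: WSU-UX. Fix integers $K\ge 2$ and $T\ge 1$ and hyperparameters $\eta,\gamma$. The pair $(\eta,\gamma)$ is called valid if $\eta,\gamma\in(0,1/2)$ and $\eta K/\gamma\le 1/2$. Given a fixed loss sequence $\ell_t\in[0,1]^K$, WSU-UX sets $\pi_{1,i}=1/K$ and in each round $t$: forms $\tilde\pi_{t,i}=(1-\gamma)\pi_{t,i}+\gamma/K$; draws $I_t$ with $\Pr(I_t=i\mid\mathcal F_{t-1})=\tilde\pi_{t,i}$; sets $\hat\ell_{t,i}=\ell_{t,i}\mathbf 1[I_t=i]/\tilde\pi_{t,i}$; and updates $\pi_{t+1,i}=\pi_{t,i}\bigl(1-\eta(\hat\ell_{t,i}-\sum_{j}\pi_{t,j}\hat\ell_{t,j})\bigr)$; $\mathcal F_t$ is the history generated by $I_1,\dots,I_t$. Two-phase loss sequence ($K=2$, $T$ a multiple of $100$): with $T_1=\frac{T}{100}$, $\ell_{t,1}=1,\ell_{t,2}=0$ for $1\le t\le T_1$ and $\ell_{t,1}=0,\ell_{t,2}=1$ for $T_1<t\le T$. Further set $T_2=\frac{2}{10}T$, $T_3=\frac1{10}T$, $T_4=\frac{69}{100}T$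 (so $T_1+T_2+T_3+T_4=T$). $\mathcal E_2$ denotes the event $\{\pi_{T_1+T_2+1,1}\ge\frac14\}$. *)

(* Defs.v *)
From HB Require Import structures.
From mathcomp Require Import all_boot all_order all_algebra.
From mathcomp Require Import all_classical all_reals all_analysis.
Set Implicit Arguments. Unset Strict Implicit. Unset Printing Implicit Defensive.
Import Order.TTheory GRing.Theory Num.Theory.
Local Open Scope ring_scope.

Section WSUUX.
Variables (R : realType) (K : nat) (eta gamma : R).
(* loss t i : loss of arm i at round t (rounds are 1-indexed) *)
Variable loss : nat -> 'I_K -> R.

Definition valid_params : Prop :=
  0 < eta < 1/2 /\ 0 < gamma < 1/2 /\ eta * K%:R / gamma <= 1/2.

Definition mix (p : 'I_K -> R) (i : 'I_K) : R := (1 - gamma) * p i + gamma / K%:R.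

Definition lhat (t : nat) (p : 'I_K -> R) (Ia : 'I_K) (i : 'I_K) : R :=
  loss t i * (Ia == i)%:R / mix p i.

Definition update (t : nat) (p : 'I_K -> R) (Ia : 'I_K) (i : 'I_K) : R :=
  p i * (1 - eta * (lhat t p Ia i - \sum_(j < K) p j * lhat t p Ia j)).

Fixpoint run (t : nat) (p : 'I_K -> R) (s : seq 'I_K) : 'I_K -> R :=
  match s with
  | [::] => p
  | a :: s' => run t.+1 (update t p a) s'
  end.

Definition pi1 : 'I_K -> R := fun _ => 1 / K%:R.

(* pi_of h = pi_t where h = [:: I_1; ...; I_(t-1)] is the history *)
Definition pi_of (h : seq 'I_K) : 'I_K -> R := run 1 pi1 h.

(* probability of the history s = [:: I_t; I_(t+1); ...] given current round t
   and weights p: product of the sampling probabilities ~pi_{k,I_k} *)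
Fixpoint prob_run (t : nat) (p : 'I_K -> R) (s : seq 'I_K) : R :=
  match s with
  | [::] => 1
  | a :: s' => mix p a * prob_run t.+1 (update t p a) s'
  end.

Definition hist_prob (h : seq 'I_K) : R := prob_run 1 pi1 h.
End WSUUX.

(* Two-phase loss sequence, K = 2, arms 1,2 are ord0, ord_max (i.e. 0 and 1). *)
Definition T1 (T : nat) : nat := T %/ 100.
Definition T2 (T : nat) : nat := (2 * T) %/ 10.
Definition T3 (T : nat) : nat := T %/ 10.
Definition T4 (T : nat) : nat := (69 * T) %/ 100.

Definition two_phase_loss {R : realType} (T : nat) (t : nat) (i : 'I_2) : R :=
  if (t <= T1 T)%N then (if i == ord0 then 1 else 0)
  else (if i == ord0 then 0 else 1).

Section Prob.
Variables (R : realType) (T : nat) (eta gamma : R).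
Notation L := (@two_phase_loss R T).

(* sample space: full histories (I_1,...,I_T) *)
Definition Pw (w : T.-tuple 'I_2) : R := hist_prob eta gamma L w.

(* pi_t evaluated on the history w (uses I_1..I_(t-1)) *)
Definition pi_at (t : nat) (w : T.-tuple 'I_2) : 'I_2 -> R :=
  pi_of eta gamma L (take t.-1 w).

Definition E2 (w : T.-tuple 'I_2) : bool := 1/4 <= pi_at (T1 T + T2 T).+1 w ord0.

Definition PrE2 : R := \sum_(w : T.-tuple 'I_2 | E2 w) Pw w.

Definition cond_exp_pi2 (t : nat) : R :=
  (\sum_(w : T.-tuple 'I_2 | E2 w) Pw w * pi_at t w ord_max) / PrE2.
End Prob.

(* Main.v *)
Require Import Defs.
From HB Require Import structures.
From mathcomp Require Import all_boot all_order all_algebra.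
From mathcomp Require Import all_classical all_reals all_analysis.
From mathcomp Require Import ring lra zify.
Import Order.TTheory GRing.Theory Num.Theory.
Local Open Scope ring_scope.

Lemma big2 (R : realType) (f : 'I_2 -> R) : \sum_(j < 2) f j = f ord0 + f ord_max.
Proof. by rewrite !big_ord_recl big_ord0 addr0; congr (_ + f _); apply/val_inj. Qed.

Lemma I2P (i : 'I_2) : i = ord0 \/ i = ord_max.
Proof. case: i => [[|[|n]]] Hi; [left|right|]; try apply/val_inj; done. Qed.

Lemma big_tuple_cons (R : realType) n (G : n.+1.-tuple 'I_2 -> R) :
  \sum_(w : n.+1.-tuple 'I_2) G w = \sum_(a < 2) \sum_(w : n.-tuple 'I_2) G (cons_tuple a w).
Proof.
rewrite pair_big /=.
rewrite (reindex (fun x : 'I_2 * n.-tuple 'I_2 => cons_tuple x.1 x.2)) //=.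
exists (fun w : n.+1.-tuple 'I_2 => (thead w, behead_tuple w)).
- by move=> [a w] _ /=; congr pair; apply/val_inj.
- by move=> w _ /=; apply/val_inj => /=; rewrite [in RHS](tuple_eta w).
Qed.

Lemma big_tuple0 (R : realType) (G : 0.-tuple 'I_2 -> R) :
  \sum_(w : 0.-tuple 'I_2) G w = G [tuple].
Proof. by rewrite (big_pred1 [tuple]) // => w; rewrite /= (tuple0 w); apply/esym/eqP. Qed.

Section Main.
Variables (R : realType) (T : nat) (eta gamma : R).
Hypothesis hv : valid_params 2 eta gamma.
Notation L := (@two_phase_loss R T).
Notation upd := (update eta gamma L).
Notation m := (mix gamma).

Fixpoint Ex (k : nat) (t : nat) (p : 'I_2 -> R) (F : seq 'I_2 -> R) : R :=
  match k with
  | 0 => F [::]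
  | k'.+1 => \sum_(a < 2) m p a * Ex k' t.+1 (upd t p a) (fun s => F (a :: s))
  end.

Lemma sum_tuple k : forall t p (F : seq 'I_2 -> R),
  \sum_(w : k.-tuple 'I_2) prob_run eta gamma L t p w * F w = Ex k t p F.
Proof.
elim: k => [|k IH] t p F.
  by rewrite big_tuple0 /= mul1r.
rewrite big_tuple_cons /=; apply: eq_bigr => a _.
rewrite -IH mulr_sumr; apply: eq_bigr => w _ /=; by rewrite mulrA.
Qed.

Definition ok (p : 'I_2 -> R) := [/\ 0 <= p ord0, 0 <= p ord_max & p ord0 + p ord_max = 1].

Lemma hv' : [/\ 0 < eta, eta < 1/2, 0 < gamma, gamma < 1/2 & 4 * eta <= gamma].
Proof.
case: hv => /andP[e0 e1] [/andP[g0 g1] h].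
split => //.
move: h; rewrite ler_pdivrMr // => h; lra.
Qed.

Lemma loss01 t a : 0 <= L t a <= 1.
Proof. rewrite /two_phase_loss; by case: ifP; case: ifP => _ _; rewrite ?lexx ?ler01. Qed.

Lemma mix_ge p a : ok p -> gamma / 2 <= m p a.
Proof.
case=> h0 h1 hs; case: hv' => e0 e1 g0 g1 h.
rewrite /mix; case: (I2P a) => ->; nra.
Qed.

Lemma mix_sum p : ok p -> m p ord0 + m p ord_max = 1.
Proof. case=> h0 h1 hs; rewrite /mix. have -> : p ord_max = 1 - p ord0 by lra. by field. Qed.

Lemma lhat_same t p a : lhat gamma L t p a a = L t a / m p a.
Proof. by rewrite /lhat eqxx mulr1. Qed.

Lemma lhat_other t p a i : a != i -> lhat gamma L t p a i = 0.
Proof. by move/negbTE=> h; rewrite /lhat h mulr0 mul0r. Qed.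

Lemma sum_lhat t p a : \sum_(j < 2) p j * lhat gamma L t p a j = p a * (L t a / m p a).
Proof.
rewrite big2; case: (I2P a) => ->.
  by rewrite !lhat_same lhat_other // mulr0 addr0.
by rewrite !lhat_same lhat_other // mulr0 add0r.
Qed.

Lemma upd_same t p a : upd t p a a = p a * (1 - eta * (L t a / m p a) * (1 - p a)).
Proof. rewrite /update sum_lhat lhat_same; congr (_ * _); ring. Qed.

Lemma upd_other t p a i : a != i -> upd t p a i = p i * (1 + eta * (L t a / m p a) * p a).
Proof. move=> h; rewrite /update sum_lhat lhat_other //; congr (_ * _); ring. Qed.

Lemma x_bound t p a : ok p -> 0 <= eta * (L t a / m p a) <= 1/2.
Proof.
move=> hp; have hm := mix_ge p a hp; case: hv' => e0 e1 g0 g1 h.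
have mpos : 0 < m p a by lra.
case/andP: (loss01 t a) => l0 l1.
apply/andP; split.
  by apply: mulr_ge0; [lra|apply: divr_ge0; lra].
rewrite mulrA ler_pdivrMr //. nra.
Qed.

Lemma upd_ok t p a : ok p -> ok (upd t p a).
Proof.
move=> hp; case: (I2P a) => ->.
  move: (x_bound t p ord0 hp); rewrite /ok upd_same upd_other //.
  set x := eta * _ => /andP[x0 x1]; case: hp => h0 h1 hs; split.
  - apply: mulr_ge0 => //; nra.
  - apply: mulr_ge0 => //; nra.
  - have -> : 1 - p ord0 = p ord_max by lra.
    by transitivity (p ord0 + p ord_max); [ring|].
move: (x_bound t p ord_max hp); rewrite /ok upd_same upd_other //.
set x := eta * _ => /andP[x0 x1]; case: hp => h0 h1 hs; split.
- apply: mulr_ge0 => //; nra.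
- apply: mulr_ge0 => //; nra.
- have -> : 1 - p ord_max = p ord0 by lra.
  by transitivity (p ord0 + p ord_max); [ring|].
Qed.

Lemma ok_run s : forall t p, ok p -> ok (run eta gamma L t p s).
Proof. elim: s => [|a s IH] t p hp //=; apply: IH; exact: upd_ok. Qed.

Lemma ok_pi1 : ok (@pi1 R 2).
Proof. rewrite /ok /pi1; split; lra. Qed.

Lemma Ex_ext_size k : forall t p F G, (forall s, size s = k -> F s = G s) ->
  Ex k t p F = Ex k t p G.
Proof.
elim: k => [|k IH] t p F G h /=; first by apply: h.
apply: eq_bigr => a _; congr (_ * _); apply: IH => s hs; apply: h => /=; by rewrite hs.
Qed.

Lemma Ex_le_size k : forall t p F G, ok p -> (forall s, size s = k -> F s <= G s) ->
  Ex k t p F <= Ex k t p G.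
Proof.
elim: k => [|k IH] t p F G hp h /=; first by apply: h.
apply: ler_sum => a _; apply: ler_wpM2l.
  by have := mix_ge p a hp; case: hv' => *; lra.
apply: IH; first exact: upd_ok.
by move=> s hs; apply: h => /=; rewrite hs.
Qed.

Lemma Ex_const k : forall t p c, ok p -> Ex k t p (fun _ => c) = c.
Proof.
elim: k => [|k IH] t p c hp //=.
rewrite big2 !IH; try exact: upd_ok.
by rewrite -mulrDl mix_sum // mul1r.
Qed.

Lemma Ex_scale k : forall t p c F, Ex k t p (fun s => c * F s) = c * Ex k t p F.
Proof.
elim: k => [|k IH] t p c F //=.
rewrite mulr_sumr; apply: eq_bigr => a _; rewrite (IH _ _ c (fun s => F (a :: s))).
by rewrite mulrCA.
Qed.

Lemma Ex_split k : forall n t p F,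
  Ex (k + n) t p F = Ex k t p (fun s => Ex n (t + k) (run eta gamma L t p s) (fun s' => F (s ++ s'))).
Proof.
elim: k => [|k IH] n t p F; first by rewrite add0n /= addn0.
rewrite addSn /=; apply: eq_bigr => a _; rewrite IH.
by rewrite addSnnS.
Qed.

Lemma run_cat s1 : forall s2 t p,
  run eta gamma L t p (s1 ++ s2) = run eta gamma L (t + size s1) (run eta gamma L t p s1) s2.
Proof. elim: s1 => [|a s1 IH] s2 t p /=; first by rewrite addn0. by rewrite IH addSnnS. Qed.

Lemma L2_0 t : (T1 T < t)%N -> L t ord0 = 0.
Proof. by move=> h; rewrite /two_phase_loss leqNgt h. Qed.

Lemma L2_1 t : (T1 T < t)%N -> L t ord_max = 1.
Proof. by move=> h; rewrite /two_phase_loss leqNgt h. Qed.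

Lemma exp_step t p : (T1 T < t)%N -> ok p ->
  \sum_(a < 2) m p a * upd t p a ord_max = p ord_max - eta * p ord0 * p ord_max.
Proof.
move=> ht hp; rewrite big2 upd_other // upd_same L2_0 // L2_1 //.
have hm := mix_ge p ord_max hp; have hs2 := mix_sum p hp.
case: hv' => e0 e1 g0 g1 _.
have mpos : m p ord_max != 0 by apply: lt0r_neq0; lra.
case: hp => h0 h1 hs.
have -> : m p ord_max * (p ord_max * (1 - eta * (1 / m p ord_max) * (1 - p ord_max)))
  = m p ord_max * p ord_max - eta * p ord_max * (1 - p ord_max) by field.
rewrite mul0r mulr0 mul0r addr0 mulr1.
transitivity ((m p ord0 + m p ord_max) * p ord_max - eta * p ord_max * (1 - p ord_max)); first ring.
rewrite hs2 mul1r; have -> : 1 - p ord_max = p ord0 by lra.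
ring.
Qed.

Lemma upd_ord0_ge t p a : (T1 T < t)%N -> ok p -> p ord0 <= upd t p a ord0.
Proof.
move=> ht hp; case: (I2P a) => ->.
  by rewrite upd_same L2_0 // mul0r mulr0 mul0r subr0 mulr1.
move: (x_bound t p ord_max hp); rewrite upd_other //.
set x := eta * _ => /andP[x0 x1]; case: hp => h0 h1 hs.
by rewrite mulrDr mulr1 lerDl; apply: mulr_ge0 => //; apply: mulr_ge0.
Qed.

Lemma decay tau : forall t q, (T1 T < t)%N -> ok q -> 1/4 <= q ord0 ->
  Ex tau t q (fun s => run eta gamma L t q s ord_max) <= (1 - eta/4) ^+ tau * q ord_max.
Proof.
case: hv' => e0 e1 g0 g1 _.
elim: tau => [|tau IH] t q ht hq h4 /=; first by rewrite expr0 mul1r.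
apply: (@le_trans _ _ (\sum_(a < 2) m q a * ((1 - eta/4) ^+ tau * upd t q a ord_max))).
  apply: ler_sum => a _; apply: ler_wpM2l.
    by have := mix_ge q a hq; lra.
  apply: (IH t.+1 (upd t q a)); first exact: ltnW.
    exact: upd_ok.
  by apply: le_trans h4 _; apply: upd_ord0_ge.
under eq_bigr => a _ do rewrite mulrCA.
rewrite -mulr_sumr exp_step // exprS -mulrA.
have hp : 0 <= (1 - eta/4) ^+ tau by apply: exprn_ge0; lra.
rewrite [in X in _ <= X](mulrC (1 - eta/4)) -[in X in _ <= X]mulrA; apply: ler_wpM2l => //.
case: hq => h0 h1 hs.
have h5 : 0 <= q ord0 - 1/4 by lra.
have := mulr_ge0 (mulr_ge0 (ltW e0) h1) h5.
by rewrite -subr_ge0; congr (0 <= _); ring.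
Qed.

Definition EE (s : seq 'I_2) : bool :=
  1/4 <= run eta gamma L 1 (@pi1 R 2) (take (T1 T + T2 T) s) ord0.

Lemma core tau r :
  Ex ((T1 T + T2 T) + (tau + r)) 1 (@pi1 R 2)
     (fun s => if EE s then run eta gamma L 1 (@pi1 R 2) (take (T1 T + T2 T + tau) s) ord_max else 0)
  <= 3/4 * (1 - eta/4) ^+ tau *
     Ex ((T1 T + T2 T) + (tau + r)) 1 (@pi1 R 2) (fun s => if EE s then 1 else 0).
Proof.
case: hv' => e0 e1 g0 g1 _.
set n := T1 T + T2 T.
rewrite !(Ex_split (T1 T + T2 T) (tau + r)) -Ex_scale; apply: Ex_le_size; first exact: ok_pi1.
move=> s hs.
set q := run eta gamma L 1 (@pi1 R 2) s.
have hq : ok q by apply: ok_run; exact: ok_pi1.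
have hE : forall s', EE (s ++ s') = (1/4 <= q ord0).
  by move=> sx; rewrite /EE take_cat hs /n ltnn subnn take0 cats0.
rewrite [X in _ <= _ * X](@Ex_ext_size _ _ _ _ (fun _ => if 1/4 <= q ord0 then 1 else 0)); last first.
  by move=> sx _; rewrite hE.
rewrite [X in _ <= _ * X]Ex_const //.
rewrite (@Ex_ext_size _ _ _ _ (fun s' => if 1/4 <= q ord0 then
            run eta gamma L (1 + n) q (take tau s') ord_max else 0)); last first.
  move=> s' _; rewrite hE take_cat hs /n ltnNge leq_addr /= addKn run_cat hs //.
case: ifP => h4; last by rewrite Ex_const // mulr0.
rewrite (Ex_split tau r).
rewrite (@Ex_ext_size _ _ _ _ (fun s1 => run eta gamma L (1 + n) q s1 ord_max)); last first.
  move=> s1 hs1; rewrite (@Ex_ext_size _ _ _ _ (fun _ => run eta gamma L (1 + n) q s1 ord_max)).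
    by rewrite Ex_const //; apply: ok_run.
  by move=> s2 _; rewrite take_cat hs1 ltnn subnn take0 cats0.
have ht : (T1 T < 1 + n)%N by rewrite add1n ltnS /n leq_addr.
apply: le_trans (decay tau (1 + n) q ht hq h4) _.
rewrite mulr1 mulrC ler_wpM2r //.
  by apply: exprn_ge0; lra.
case: hq => h0 h1 hs'; lra.
Qed.
End Main.

Lemma Tsplit (T : nat) : (100 %| T)%N -> (T1 T + T2 T + T3 T + T4 T = T)%N.
Proof. move=> h; rewrite /T1 /T2 /T3 /T4; lia. Qed.

Lemma exp_bound (R : realType) (eta : R) (tau : nat) : 0 < eta < 1/2 ->
  (1 - eta/4) ^+ tau <= expR (- (eta / 4) * tau%:R).
Proof.
move=> /andP[e0 e1].
rewrite expRM_natr; apply: lerXn2r; rewrite ?nnegrE; try lra.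
  by apply: ltW; apply: expR_gt0.
by have := expR_ge1Dx (- (eta / 4)); lra.
Qed.

Theorem mainTheorem18 (R : realType) (T : nat) (eta gamma : R)
  (hT : (0 < T)%N) (h100 : (100 %| T)%N)
  (hvalid : valid_params 2 eta gamma)
  (hE2 : 0 < PrE2 T eta gamma)
  (tau : nat) (htau1 : (1 <= tau)%N) (htau2 : (tau <= T3 T + T4 T)%N) :
  cond_exp_pi2 T eta gamma ((T1 T + T2 T).+1 + tau)
    <= 3 / 4 * expR (- (eta / 4) * tau%:R).
Proof.
have hs := Tsplit _ h100.
set r := (T - (T1 T + T2 T + tau))%N.
have eT : T = (T1 T + T2 T + (tau + r))%N by rewrite /r; lia.
have HN : \sum_(w : T.-tuple 'I_2 | E2 eta gamma w) Pw eta gamma w * pi_at eta gamma ((T1 T + T2 T).+1 + tau) w ord_max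
  = Ex R T eta gamma T 1 (@pi1 R 2)
     (fun s => if EE R T eta gamma s then run eta gamma (@two_phase_loss R T) 1 (@pi1 R 2) (take (T1 T + T2 T + tau) s) ord_max else 0).
  rewrite -sum_tuple big_mkcond; apply: eq_bigr => w _.
  rewrite /E2 /EE /Pw /hist_prob /pi_at /pi_of /=.
  by case: ifP => _; rewrite ?mulr0.
have HD : PrE2 T eta gamma = Ex R T eta gamma T 1 (@pi1 R 2) (fun s => if EE R T eta gamma s then 1 else 0).
  rewrite /PrE2 -sum_tuple big_mkcond; apply: eq_bigr => w _.
  rewrite /E2 /EE /Pw /hist_prob /pi_at /pi_of /=.
  by case: ifP => _; rewrite ?mulr0 ?mulr1.
have hc := @core R T eta gamma hvalid tau r.
rewrite -eT -HN -HD in hc.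
rewrite /cond_exp_pi2 ler_pdivrMr //.
apply: le_trans hc _.
apply: ler_wpM2r; first exact: ltW.
apply: ler_wpM2l; first lra.
by apply: exp_bound; case: hvalid.
Qed.
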